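(* For any frame $L$, the map $f\mapsto \beta\circ f$, where $\beta\colon\mathrm{coS}(L)\to\mathfrak{B}(\mathrm{coS}(L))$, $S\mapsto S^{\ast\ast}$, restricts to an order isomorphism $\mathrm{F}(L)\to\mathrm{C}(\mathfrak{B}(\mathrm{coS}(L)))$.
   Context: $\mathbb{Q}$ is the rationals. A sublocale of $L$ is a subset closed under arbitrary meets and such that $x\to s\in S$ for $x\in L$, $s\in S$; $\mathrm{coS}(L)$ is the frame of sublocales ordered by reverse inclusion, with pseudocomplement $^\ast$. For a frame $M$, $\mathfrak{B}(M)=\{x\mid x=x^{\ast\ast}\}$ is its Booleanization (a complete Boolean algebra) and $x\mapsto x^{\ast\ast}$ is a frame homomorphism $M\to\mathfrak{B}(M)$. The frame $\mathfrak{L}(\overline{\mathbb{IR}})$ is presented by generators $(r,\textsf{---})$, $(\textsf{---},s)$ ($r,s\in\mathbb{Q}$) with relations (r1) $(r,\textsf{---})\wedge(\textsf{---},s)=0$ for $r\ge s$; (r3) $(r,\textsf{---})=\bigvee_{s>r}(s,\textsf{---})$; (r4) $(\textsf{---},s)=\bigvee_{r<s}(\textsf{---},r)$. For a frame $M$, homomorphisms $\mathfrak{L}(\overline{\mathbb{IR}})\to M$ are ordered by $f\le g$ iff $f(r,\textsf{---})\le g(r,\textsf{---})$ and $g(\textsf{---},s)\le f(\textsf{---},s)$; $\mathrm{C}(M)$ (continuous real functions) is the set of those $f$ with (r2) $f(r,\textsf{---})\vee f(\textsf{---},s)=1$ for $r<s$, (r5) $\bigvee_r f(r,\textsf{---})=1$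 and (r6) $\bigvee_s f(\textsf{---},s)=1$. $\overline{\mathrm{F}}(L)$ is the set of homomorphisms $f\colon\mathfrak{L}(\overline{\mathbb{IR}})\to\mathrm{coS}(L)$ with $f(r,\textsf{---})^\ast\le f(\textsf{---},s)$ and $f(\textsf{---},s)^\ast\le f(r,\textsf{---})$ for $r<s$; it is a complete lattice with top $\boldsymbol{+\infty}$ ($(r,\textsf{---})\mapsto1$, $(\textsf{---},s)\mapsto0$) and bottom $\boldsymbol{-\infty}$ ($(r,\textsf{---})\mapsto0$, $(\textsf{---},s)\mapsto1$). $\mathrm{F}(L)$ is the set of $f\in\overline{\mathrm{F}}(L)$ such that for all $g\in\overline{\mathrm{F}}(L)$, $f\vee g=\boldsymbol{+\infty}\Rightarrow g=\boldsymbol{+\infty}$ and $f\wedge g=\boldsymbol{-\infty}\Rightarrow g=\boldsymbol{-\infty}$. *)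

(* Defs.v *)
From mathcomp Require Import all_boot all_order all_algebra.
Set Implicit Arguments.
Unset Strict Implicit.
Unset Printing Implicit Defensive.
Import Order.TTheory GRing.Theory Num.Theory.
Local Open Scope ring_scope.

Record frame := Frame {
  fcar :> Type;
  fle : fcar -> fcar -> Prop;
  fjoin : (fcar -> Prop) -> fcar;
  fmeet : fcar -> fcar -> fcar;
  fle_refl : forall x, fle x x;
  fle_trans : forall x y z, fle x y -> fle y z -> fle x z;
  fle_anti : forall x y, fle x y -> fle y x -> x = y;
  fjoin_ub : forall (A : fcar -> Prop) x, A x -> fle x (fjoin A);
  fjoin_least : forall (A : fcar -> Prop) y,
      (forall x, A x -> fle x y) -> fle (fjoin A) y;
  fmeet_lb1 : forall x y, fle (fmeet x y) x;
  fmeet_lb2 : forall x y, fle (fmeet x y) y;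
  fmeet_glb : forall x y z, fle z x -> fle z y -> fle z (fmeet x y);
  fdistr : forall a (A : fcar -> Prop),
      fmeet a (fjoin A) = fjoin (fun y => exists2 x, A x & y = fmeet a x)
}.

(* A homomorphism out of the presented frame L(IR-bar) is (by the universal
   property of the presentation) the same thing as an assignment of values
   to the generators (r,---) (field [hup]) and (---,s) (field [hdown])
   satisfying the relations (r1),(r3),(r4). *)
Record rhom (X : Type) := RHom { hup : rat -> X; hdown : rat -> X }.

Section Defs.
Variable L : frame.

Definition ftop : L := fjoin (fun _ : L => True).
Definition finf (A : L -> Prop) : L := fjoin (fun y => forall a, A a -> fle y a).
Definition fimp (x s : L) : L := fjoin (fun y => fle (fmeet y x) s).

Definition sublocale (S : L -> Prop) : Prop :=
  (forall A : L -> Prop, (forall a, A a -> S a) -> S (finf A)) /\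
  (forall x s, S s -> S (fimp x s)).

(* ---- the frame coS(L): sublocales ordered by reverse inclusion ---- *)
Definition cle (S T : L -> Prop) : Prop := forall x, T x -> S x.
Definition cbot : L -> Prop := fun _ => True.
Definition ctop : L -> Prop := fun x => x = ftop.
Definition cmeet (S T : L -> Prop) : L -> Prop :=
  fun x => forall U, sublocale U -> (forall y, S y -> U y) ->
                     (forall y, T y -> U y) -> U x.
Definition cjoin2 (S T : L -> Prop) : L -> Prop := fun x => S x /\ T x.
Definition cjoinI (P : rat -> Prop) (F : rat -> L -> Prop) : L -> Prop :=
  fun x => forall s, P s -> F s x.
Definition cpc (S : L -> Prop) : L -> Prop :=
  fun x => forall T, sublocale T -> cmeet T S = cbot -> T x.

Definition regular (S : L -> Prop) : Prop := sublocale S /\ cpc (cpc S) = S.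
Definition breg (S : L -> Prop) : L -> Prop := cpc (cpc S).
(* joins in B(coS L) are the ** of joins in coS(L); meets, 0, 1 as in coS(L) *)
Definition bjoin2 (S T : L -> Prop) : L -> Prop := breg (cjoin2 S T).
Definition bjoinI (P : rat -> Prop) (F : rat -> L -> Prop) : L -> Prop :=
  breg (cjoinI P F).

Definition hle (f g : rhom (L -> Prop)) : Prop :=
  (forall r, cle (hup f r) (hup g r)) /\ (forall s, cle (hdown g s) (hdown f s)).

Definition coS_hom (f : rhom (L -> Prop)) : Prop :=
  (forall r, sublocale (hup f r)) /\ (forall s, sublocale (hdown f s)) /\
  (forall r s, s <= r -> cmeet (hup f r) (hdown f s) = cbot) /\
  (forall r, hup f r = cjoinI (fun s => r < s) (hup f)) /\
  (forall s, hdown f s = cjoinI (fun r => r < s) (hdown f)).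

Definition inFbar (f : rhom (L -> Prop)) : Prop :=
  coS_hom f /\
  (forall r s, r < s ->
     cle (cpc (hup f r)) (hdown f s) /\ cle (cpc (hdown f s)) (hup f r)).

Definition pinf : rhom (L -> Prop) := RHom (fun _ => ctop) (fun _ => cbot).
Definition minf : rhom (L -> Prop) := RHom (fun _ => cbot) (fun _ => ctop).

Definition Fbar_join (f g h : rhom (L -> Prop)) : Prop :=
  inFbar h /\ hle f h /\ hle g h /\
  (forall k, inFbar k -> hle f k -> hle g k -> hle h k).
Definition Fbar_meet (f g h : rhom (L -> Prop)) : Prop :=
  inFbar h /\ hle h f /\ hle h g /\
  (forall k, inFbar k -> hle k f -> hle k g -> hle k h).

Definition inF (f : rhom (L -> Prop)) : Prop :=
  inFbar f /\
  (forall g, inFbar g ->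
     (Fbar_join f g pinf -> g = pinf) /\ (Fbar_meet f g minf -> g = minf)).

Definition B_hom (f : rhom (L -> Prop)) : Prop :=
  (forall r, regular (hup f r)) /\ (forall s, regular (hdown f s)) /\
  (forall r s, s <= r -> cmeet (hup f r) (hdown f s) = cbot) /\
  (forall r, hup f r = bjoinI (fun s => r < s) (hup f)) /\
  (forall s, hdown f s = bjoinI (fun r => r < s) (hdown f)).

Definition inC (f : rhom (L -> Prop)) : Prop :=
  B_hom f /\
  (forall r s, r < s -> bjoin2 (hup f r) (hdown f s) = ctop) /\
  bjoinI (fun _ => True) (hup f) = ctop /\
  bjoinI (fun _ => True) (hdown f) = ctop.

Definition beta (f : rhom (L -> Prop)) : rhom (L -> Prop) :=
  RHom (fun r => breg (hup f r)) (fun s => breg (hdown f s)).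

End Defs.

(* Main.v *)
Require Import Defs.
From mathcomp Require Import all_boot all_order all_algebra.
From Stdlib Require Import FunctionalExtensionality PropExtensionality.
Import Order.TTheory GRing.Theory Num.Theory.
Local Open Scope ring_scope.

Lemma seteq {L : frame} (S T : L -> Prop) : (forall x, S x <-> T x) -> S = T.
Proof. intros H. apply functional_extensionality; intros x. apply propositional_extensionality. apply H. Qed.

Lemma fmeetC {L : frame} (x y : L) : fmeet x y = fmeet y x.
Proof. apply fle_anti; apply fmeet_glb; (apply fmeet_lb1 || apply fmeet_lb2). Qed.

Lemma fle_top {L : frame} (x : L) : fle x (ftop L).
Proof. unfold ftop. exact (@fjoin_ub _ (fun _ : L => True) x I). Qed.

Lemma ftrans {L : frame} (x y z : L) : fle x y -> fle y z -> fle x z.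
Proof. apply fle_trans. Qed.

Lemma finf_lb {L : frame} (A : L -> Prop) a : A a -> fle (finf A) a.
Proof. intros Ha. unfold finf. apply fjoin_least. intros y Hy. apply Hy, Ha. Qed.

Lemma finf_glb {L : frame} (A : L -> Prop) y : (forall a, A a -> fle y a) -> fle y (finf A).
Proof. intros H. unfold finf. exact (@fjoin_ub _ (fun y0 => forall a, A a -> fle y0 a) y H). Qed.

Lemma fmeet_mono {L : frame} (x y x' y' : L) : fle x x' -> fle y y' -> fle (fmeet x y) (fmeet x' y').
Proof.
  intros H1 H2. apply fmeet_glb.
  - eapply fle_trans; [apply fmeet_lb1|exact H1].
  - eapply fle_trans; [apply fmeet_lb2|exact H2].
Qed.

Lemma fimp_adj {L : frame} (x s y : L) : fle y (fimp x s) <-> fle (fmeet y x) s.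
Proof.
  split.
  - intros H. apply ftrans with (fmeet (fimp x s) x).
    + apply fmeet_mono; [exact H| apply fle_refl].
    + rewrite fmeetC. unfold fimp. rewrite fdistr. apply fjoin_least.
      intros z [w Hw Ez]. rewrite Ez fmeetC. exact Hw.
  - intros H. unfold fimp. exact (@fjoin_ub _ (fun y0 => fle (fmeet y0 x) s) y H).
Qed.

Lemma imp_mp {L : frame} (x s : L) : fle (fmeet (fimp x s) x) s.
Proof. exact (proj1 (fimp_adj x s (fimp x s)) (fle_refl _)). Qed.

Lemma fimp_top {L : frame} (x s : L) : fle x s -> fimp x s = ftop L.
Proof.
  intros H. apply fle_anti; [apply fle_top|]. apply fimp_adj.
  eapply fle_trans; [apply fmeet_lb2|exact H].
Qed.

Lemma fimp_meet {L : frame} (y a b : L) : fimp y (fmeet a b) = fmeet (fimp y a) (fimp y b).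
Proof.
  apply fle_anti.
  - apply fmeet_glb; apply fimp_adj.
    + apply ftrans with (fmeet a b); [apply imp_mp| apply fmeet_lb1].
    + apply ftrans with (fmeet a b); [apply imp_mp| apply fmeet_lb2].
  - apply fimp_adj. apply fmeet_glb.
    + apply ftrans with (fmeet (fimp y a) y).
      * apply fmeet_mono; [apply fmeet_lb1|apply fle_refl].
      * apply imp_mp.
    + apply ftrans with (fmeet (fimp y b) y).
      * apply fmeet_mono; [apply fmeet_lb2|apply fle_refl].
      * apply imp_mp.
Qed.

Lemma meet_imp {L : frame} (s x : L) : fle x s -> fmeet s (fimp s x) = x.
Proof.
  intros H. apply fle_anti.
  - rewrite fmeetC. apply imp_mp.
  - apply fmeet_glb; [exact H|]. apply fimp_adj, fmeet_lb1.
Qed.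

Lemma top_meet {L : frame} (y : L) : fmeet (ftop L) y = y.
Proof. apply fle_anti; [apply fmeet_lb2| apply fmeet_glb; [apply fle_top|apply fle_refl]]. Qed.
Lemma meet_top {L : frame} (y : L) : fmeet y (ftop L) = y.
Proof. rewrite fmeetC. apply top_meet. Qed.

Lemma sl_top {L : frame} (S : L -> Prop) : sublocale S -> S (ftop L).
Proof.
  intros [H1 _].
  assert (E : finf (fun _ : L => False) = ftop L).
  { apply fle_anti; [apply fle_top| apply finf_glb; intros a []]. }
  rewrite <- E. apply H1. intros a [].
Qed.

Lemma sl_meet {L : frame} (S : L -> Prop) (a b : L) : sublocale S -> S a -> S b -> S (fmeet a b).
Proof.
  intros [H1 _] Ha Hb.
  assert (E : finf (fun z => z = a \/ z = b) = fmeet a b).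
  { apply fle_anti.
    - apply fmeet_glb; apply finf_lb; auto.
    - apply finf_glb. intros z [E|E]; rewrite E; [apply fmeet_lb1|apply fmeet_lb2]. }
  rewrite <- E. apply H1. intros z [E'|E']; rewrite E'; assumption.
Qed.

Lemma sl_inter {L : frame} {Ix : Type} (P : Ix -> Prop) (F : Ix -> L -> Prop) :
  (forall i, P i -> sublocale (F i)) -> sublocale (fun x => forall i, P i -> F i x).
Proof.
  intros H. split.
  - intros A HA i Pi. apply (proj1 (H i Pi)). intros a Aa. apply HA; auto.
  - intros x s Hs i Pi. apply (proj2 (H i Pi)). auto.
Qed.

Lemma sl_cmeet {L : frame} (S T : L -> Prop) : sublocale (cmeet S T).
Proof.
  split.
  - intros A HA U sU HS HT. apply (proj1 sU). intros a Aa. apply HA; auto.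
  - intros x s Hs U sU HS HT. apply (proj2 sU). apply Hs; auto.
Qed.

Lemma sl_cpc {L : frame} (S : L -> Prop) : sublocale (cpc S).
Proof.
  split.
  - intros A HA T sT HT. apply (proj1 sT). intros a Aa. apply HA; auto.
  - intros x s Hs T sT HT. apply (proj2 sT). apply Hs; auto.
Qed.

Lemma sl_cjoinI {L : frame} (P : rat -> Prop) (F : rat -> L -> Prop) :
  (forall s, P s -> sublocale (F s)) -> sublocale (cjoinI P F).
Proof. intros H. exact (sl_inter P F H). Qed.

Lemma sl_cjoin2 {L : frame} (S T : L -> Prop) : sublocale S -> sublocale T -> sublocale (cjoin2 S T).
Proof.
  intros [a1 a2] [b1 b2]. split.
  - intros A HA. split; [apply a1|apply b1]; intros a Aa; apply HA; auto.
  - intros x s [H1 H2]. split; auto.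
Qed.

Lemma sl_ctop {L : frame} : sublocale (@ctop L).
Proof.
  split.
  - intros A HA. unfold ctop. apply fle_anti; [apply fle_top|]. apply finf_glb.
    intros a Aa. rewrite (HA a Aa). apply fle_refl.
  - intros x s Hs. unfold ctop in *. rewrite Hs. apply fimp_top, fle_top.
Qed.

Lemma sl_cbot {L : frame} : sublocale (@cbot L).
Proof. split; intros; exact I. Qed.

Lemma cmeet_char {L : frame} (S T : L -> Prop) x : sublocale S -> sublocale T ->
  cmeet S T x -> exists a t, S a /\ T t /\ x = fmeet a t.
Proof.
  intros sS sT H.
  apply (H (fun x => exists a t, S a /\ T t /\ x = fmeet a t)).
  - split.
    + intros A HA.
      exists (finf (fun a => S a /\ exists z t, A z /\ T t /\ z = fmeet a t)).
      exists (finf (fun t => T t /\ exists z a, A z /\ S a /\ z = fmeet a t)).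
      split; [|split].
      * apply (proj1 sS). intros a [Sa _]. exact Sa.
      * apply (proj1 sT). intros t [Tt _]. exact Tt.
      * apply fle_anti.
        -- apply fmeet_glb.
           ++ apply finf_glb. intros a [Sa [z [t [Az [Tt Ez]]]]].
              eapply fle_trans; [apply finf_lb, Az|]. rewrite Ez. apply fmeet_lb1.
           ++ apply finf_glb. intros t [Tt [z [a [Az [Sa Ez]]]]].
              eapply fle_trans; [apply finf_lb, Az|]. rewrite Ez. apply fmeet_lb2.
        -- apply finf_glb. intros z Az. destruct (HA z Az) as [a [t [Sa [Tt Ez]]]].
           rewrite Ez. apply fmeet_mono.
           ++ apply finf_lb. split; [exact Sa|]. exists z, t. auto.
           ++ apply finf_lb. split; [exact Tt|]. exists z, a. auto.
    + intros y s [a [t [Sa [Tt Es]]]]. exists (fimp y a), (fimp y t).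
      split; [apply (proj2 sS); auto | split; [apply (proj2 sT); auto|]].
      rewrite Es. apply fimp_meet.
  - intros y Sy. exists y, (ftop L). split; [auto|split; [apply sl_top; auto|]].
    symmetry. apply meet_top.
  - intros y Ty. exists (ftop L), y. split; [apply sl_top; auto|split; [auto|]].
    symmetry. apply top_meet.
Qed.

Lemma key {L : frame} {Ix : Type} (S : L -> Prop) (P : Ix -> Prop) (F : Ix -> L -> Prop) x :
  sublocale S -> (forall i, P i -> sublocale (F i)) ->
  (forall i, P i -> cmeet S (F i) x) -> cmeet S (fun y => forall i, P i -> F i y) x.
Proof.
  intros sS sF H.
  pose proof (Ss := proj1 sS (fun a => S a /\ fle x a) (fun a Ha => proj1 Ha)).
  remember (finf (fun a => S a /\ fle x a)) as s eqn:Es.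
  assert (xs : fle x s) by (rewrite Es; apply finf_glb; intros a [_ H']; exact H').
  rewrite <- (meet_imp s x xs).
  intros U sU HS HT. apply sl_meet; [exact sU| apply HS, Ss| apply HT].
  intros i Pi. destruct (cmeet_char S (F i) x sS (sF i Pi) (H i Pi)) as [a [t [Sa [Tt Ex]]]].
  assert (sa : fle s a).
  { rewrite Es. apply finf_lb. split; [exact Sa|]. rewrite Ex. apply fmeet_lb1. }
  rewrite Ex fimp_meet (fimp_top s a sa) top_meet.
  apply (proj2 (sF i Pi)). exact Tt.
Qed.

Lemma dz {L : frame} {Ix : Type} (Z : L -> Prop) (P : Ix -> Prop) (F : Ix -> L -> Prop) :
  sublocale Z -> (forall i, P i -> sublocale (F i)) -> (forall i, P i -> cmeet Z (F i) = (@cbot L)) ->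
  cmeet Z (fun y => forall i, P i -> F i y) = (@cbot L).
Proof.
  intros sZ sF H. apply seteq. intros x; split; [intros; exact I|intros _].
  apply key; auto. intros i Pi. rewrite (H i Pi). exact I.
Qed.

Lemma dzI {L : frame} (Z : L -> Prop) (P : rat -> Prop) (F : rat -> L -> Prop) :
  sublocale Z -> (forall i, P i -> sublocale (F i)) -> (forall i, P i -> cmeet Z (F i) = (@cbot L)) ->
  cmeet Z (cjoinI P F) = (@cbot L).
Proof. exact (@dz L rat Z P F). Qed.

Lemma cmeetC {L : frame} (S T : L -> Prop) : cmeet S T = cmeet T S.
Proof. apply seteq; intros x; split; intros H U sU H1 H2; apply H; auto. Qed.

Lemma cle_refl {L : frame} (S : L -> Prop) : cle S S.
Proof. intros x H; exact H. Qed.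

Lemma cle_trans {L : frame} (S T U : L -> Prop) : cle S T -> cle T U -> cle S U.
Proof. intros H1 H2 x H. apply H1, H2, H. Qed.

Lemma cle_anti {L : frame} (S T : L -> Prop) : cle S T -> cle T S -> S = T.
Proof. intros H1 H2. apply seteq; intros x; split; [apply H2|apply H1]. Qed.

Lemma cle_bot {L : frame} (X : L -> Prop) : cle (@cbot L) X.
Proof. intros x _; exact I. Qed.

Lemma bot_eq {L : frame} (Z : L -> Prop) : cle Z (@cbot L) -> Z = (@cbot L).
Proof. intros H. apply seteq; intros x; split; [intros; exact I| intros _; apply H; exact I]. Qed.

Lemma cle_top {L : frame} (X : L -> Prop) : sublocale X -> cle X (@ctop L).
Proof. intros sX x Hx. unfold ctop in Hx. rewrite Hx. apply sl_top; auto. Qed.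

Lemma cmeet_l {L : frame} (S T : L -> Prop) : cle (cmeet S T) S.
Proof. intros x Sx U sU HS HT. apply HS, Sx. Qed.

Lemma cmeet_r {L : frame} (S T : L -> Prop) : cle (cmeet S T) T.
Proof. intros x Sx U sU HS HT. apply HT, Sx. Qed.

Lemma cmeet_glb {L : frame} (Z S T : L -> Prop) : sublocale Z -> cle Z S -> cle Z T -> cle Z (cmeet S T).
Proof. intros sZ H1 H2 x Hx. apply Hx; [exact sZ| exact H1| exact H2]. Qed.

Lemma cmeet_mono {L : frame} (S S' T T' : L -> Prop) :
  cle S S' -> cle T T' -> cle (cmeet S T) (cmeet S' T').
Proof.
  intros H1 H2 x H U sU HS HT. apply H; [exact sU| intros y Hy; apply HS, H1, Hy | intros y Hy; apply HT, H2, Hy].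
Qed.

Lemma disj_mono {L : frame} (Z Z' X X' : L -> Prop) :
  cle Z Z' -> cle X X' -> cmeet Z' X' = (@cbot L) -> cmeet Z X = (@cbot L).
Proof. intros H1 H2 H3. apply bot_eq. rewrite <- H3. apply cmeet_mono; auto. Qed.

Lemma cpc_le {L : frame} (T X : L -> Prop) : sublocale T -> cmeet T X = (@cbot L) -> cle T (cpc X).
Proof. intros sT H x Hx. apply Hx; auto. Qed.

Lemma cmeet_pc {L : frame} (X : L -> Prop) : sublocale X -> cmeet X (cpc X) = (@cbot L).
Proof.
  intros sX.
  assert (E : cpc X = (fun y => forall T : L -> Prop, (sublocale T /\ cmeet T X = (@cbot L)) -> (fun U => U) T y)).
  { apply seteq. intros y; split; intros H; [intros T [a b]; apply H; auto | intros T a b; apply H; auto]. }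
  rewrite E. apply dz; [exact sX| intros T [a b]; exact a| intros T [a b]; rewrite cmeetC; exact b].
Qed.

Lemma pc_cmeet {L : frame} (X : L -> Prop) : sublocale X -> cmeet (cpc X) X = (@cbot L).
Proof. intros sX. rewrite cmeetC. apply cmeet_pc, sX. Qed.

Lemma le_pc_disj {L : frame} (Z X : L -> Prop) : sublocale X -> cle Z (cpc X) -> cmeet Z X = (@cbot L).
Proof. intros sX H. apply (disj_mono Z (cpc X) X X H (cle_refl X)). apply pc_cmeet, sX. Qed.

Lemma pc_anti {L : frame} (X Y : L -> Prop) : cle X Y -> cle (cpc Y) (cpc X).
Proof.
  intros H x Hx T sT HT. apply Hx; [exact sT|].
  apply (disj_mono T T X Y); [apply cle_refl|exact H|exact HT].
Qed.

Lemma le_pcpc {L : frame} (X : L -> Prop) : sublocale X -> cle X (cpc (cpc X)).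
Proof. intros sX. apply cpc_le; [exact sX| apply cmeet_pc, sX]. Qed.

Lemma pc3 {L : frame} (X : L -> Prop) : sublocale X -> cpc (cpc (cpc X)) = cpc X.
Proof.
  intros sX. apply cle_anti.
  - apply pc_anti, le_pcpc, sX.
  - apply le_pcpc, sl_cpc.
Qed.

Lemma breg_idem {L : frame} (Y : L -> Prop) : breg (breg Y) = breg Y.
Proof. unfold breg. apply pc3, sl_cpc. Qed.

Lemma breg_mono {L : frame} (X Y : L -> Prop) : cle X Y -> cle (breg X) (breg Y).
Proof. intros H. apply pc_anti, pc_anti, H. Qed.

Lemma le_breg {L : frame} (X : L -> Prop) : sublocale X -> cle X (breg X).
Proof. apply le_pcpc. Qed.

Lemma pc_bot {L : frame} : cpc (@cbot L) = (@ctop L).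
Proof.
  apply seteq; intros x; split.
  - intros H. apply H; [apply sl_ctop|]. apply bot_eq. apply cmeet_r.
  - intros Hx T sT _. unfold ctop in Hx. rewrite Hx. apply sl_top; auto.
Qed.

Lemma cmeet_top {L : frame} (T : L -> Prop) : sublocale T -> cmeet T (@ctop L) = T.
Proof.
  intros sT. apply cle_anti; [apply cmeet_l|].
  apply cmeet_glb; [exact sT| apply cle_refl| apply cle_top, sT].
Qed.

Lemma pc_top {L : frame} : cpc (@ctop L) = (@cbot L).
Proof.
  apply seteq; intros x; split; [intros; exact I|].
  intros _ T sT HT. rewrite (cmeet_top T sT) in HT. rewrite HT. exact I.
Qed.

Lemma cj_mono {L : frame} (P : rat -> Prop) (F G : rat -> L -> Prop) :
  (forall s, P s -> cle (F s) (G s)) -> cle (cjoinI P F) (cjoinI P G).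
Proof. intros H x Hx s Ps. apply (H s Ps). apply Hx, Ps. Qed.

Lemma cj_ub {L : frame} (P : rat -> Prop) (F : rat -> L -> Prop) s : P s -> cle (F s) (cjoinI P F).
Proof. intros Ps x Hx. apply Hx, Ps. Qed.

Lemma cj_lub {L : frame} (P : rat -> Prop) (F : rat -> L -> Prop) Z :
  (forall s, P s -> cle (F s) Z) -> cle (cjoinI P F) Z.
Proof. intros H x Zx s Ps. apply (H s Ps), Zx. Qed.

Lemma breg_join {L : frame} (P : rat -> Prop) (F : rat -> L -> Prop) :
  (forall s, P s -> sublocale (F s)) ->
  breg (cjoinI P (fun s => breg (F s))) = breg (cjoinI P F).
Proof.
  intros sF. apply cle_anti.
  - apply cle_trans with (breg (breg (cjoinI P F))).
    + apply breg_mono. apply cj_lub. intros s Ps. apply breg_mono, cj_ub, Ps.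
    + rewrite breg_idem. apply cle_refl.
  - apply breg_mono. apply cj_mono. intros s Ps. apply le_breg, sF, Ps.
Qed.

Lemma rat_up (r : rat) : r < r + 1.
Proof. by rewrite ltrDl ltr01. Qed.

Lemma rat_down (s : rat) : s - 1 < s.
Proof. by rewrite ltrBlDr ltrDl ltr01. Qed.

Lemma rat_mid (r t : rat) : r < t -> exists m, r < m /\ m < t.
Proof. intros H. exists ((r + t) / 2). destruct (midf_lt H) as [a b]. split; assumption. Qed.

Lemma cj_dense_up {L : frame} (G : rat -> L -> Prop) r :
  cjoinI (fun s => r < s) G = cjoinI (fun s => r < s) (fun s => cjoinI (fun t => s < t) G).
Proof.
  apply seteq; intros x; split.
  - intros H s rs t st. apply H. exact: lt_trans rs st.
  - intros H t rt. destruct (rat_mid r t rt) as [m [rm mt]]. exact (H m rm t mt).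
Qed.

Lemma cj_dense_down {L : frame} (G : rat -> L -> Prop) s :
  cjoinI (fun r => r < s) G = cjoinI (fun r => r < s) (fun r => cjoinI (fun q => q < r) G).
Proof.
  apply seteq; intros x; split.
  - intros H r rs q qr. apply H. exact: lt_trans qr rs.
  - intros H q qs. destruct (rat_mid q s qs) as [m [qm ms]]. exact (H m ms q qm).
Qed.

Lemma rhom_ext {L : frame} (f g : rhom (L -> Prop)) :
  (forall r, hup f r = hup g r) -> (forall s, hdown f s = hdown g s) -> f = g.
Proof.
  destruct f as [fu fd], g as [gu gd]. simpl. intros H1 H2. f_equal.
  - apply functional_extensionality; exact H1.
  - apply functional_extensionality; exact H2.
Qed.


Lemma Fb_sup {L : frame} (f : rhom (L -> Prop)) : inFbar f -> forall r, sublocale (hup f r).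
Proof. intros [[H _] _]; exact H. Qed.
Lemma Fb_sdown {L : frame} (f : rhom (L -> Prop)) : inFbar f -> forall s, sublocale (hdown f s).
Proof. intros [[_ [H _]] _]; exact H. Qed.
Lemma Fb_r1 {L : frame} (f : rhom (L -> Prop)) : inFbar f ->
  forall r s, s <= r -> cmeet (hup f r) (hdown f s) = (@cbot L).
Proof. intros [[_ [_ [H _]]] _]; exact H. Qed.
Lemma Fb_r3 {L : frame} (f : rhom (L -> Prop)) : inFbar f ->
  forall r, hup f r = cjoinI (fun s => r < s) (hup f).
Proof. intros [[_ [_ [_ [H _]]]] _]; exact H. Qed.
Lemma Fb_r4 {L : frame} (f : rhom (L -> Prop)) : inFbar f ->
  forall s, hdown f s = cjoinI (fun r => r < s) (hdown f).
Proof. intros [[_ [_ [_ [_ H]]]] _]; exact H. Qed.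
Lemma Fb_c1 {L : frame} (f : rhom (L -> Prop)) : inFbar f ->
  forall r s, r < s -> cle (cpc (hup f r)) (hdown f s).
Proof. intros [_ H] r s rs; exact (proj1 (H r s rs)). Qed.
Lemma Fb_c2 {L : frame} (f : rhom (L -> Prop)) : inFbar f ->
  forall r s, r < s -> cle (cpc (hdown f s)) (hup f r).
Proof. intros [_ H] r s rs; exact (proj2 (H r s rs)). Qed.

Lemma Fb_up_le_pc {L : frame} (f : rhom (L -> Prop)) : inFbar f ->
  forall r, cle (hup f r) (cpc (hdown f r)).
Proof. intros Hf r. apply cpc_le; [apply Fb_sup, Hf| apply (Fb_r1 f Hf r r (lexx r))]. Qed.

Lemma Fb_down_le_pc {L : frame} (f : rhom (L -> Prop)) : inFbar f ->
  forall r, cle (hdown f r) (cpc (hup f r)).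
Proof. intros Hf r. apply cpc_le; [apply Fb_sdown, Hf| rewrite cmeetC; apply (Fb_r1 f Hf r r (lexx r))]. Qed.

Lemma Fb_up_mono {L : frame} (f : rhom (L -> Prop)) : inFbar f ->
  forall r r', r <= r' -> cle (hup f r') (hup f r).
Proof.
  intros Hf r r' H x Hx. rewrite le_eqVlt in H. case/orP: H => [/eqP E|H].
  - rewrite <- E. exact Hx.
  - rewrite (Fb_r3 f Hf r) in Hx. apply Hx, H.
Qed.

Lemma Fb_down_mono {L : frame} (f : rhom (L -> Prop)) : inFbar f ->
  forall s s', s <= s' -> cle (hdown f s) (hdown f s').
Proof.
  intros Hf s s' H x Hx. rewrite le_eqVlt in H. case/orP: H => [/eqP E|H].
  - rewrite E. exact Hx.
  - rewrite (Fb_r4 f Hf s') in Hx. apply Hx, H.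
Qed.

Lemma Fb_up_rep {L : frame} (f : rhom (L -> Prop)) : inFbar f ->
  forall r, hup f r = cjoinI (fun s => r < s) (fun s => cpc (hdown f s)).
Proof.
  intros Hf r. apply cle_anti.
  - rewrite (Fb_r3 f Hf r). apply cj_mono. intros s _. apply Fb_up_le_pc, Hf.
  - apply cj_lub. intros s rs. apply Fb_c2; auto.
Qed.

Lemma Fb_down_rep {L : frame} (f : rhom (L -> Prop)) : inFbar f ->
  forall s, hdown f s = cjoinI (fun r => r < s) (fun r => cpc (hup f r)).
Proof.
  intros Hf s. apply cle_anti.
  - rewrite (Fb_r4 f Hf s). apply cj_mono. intros r _. apply Fb_down_le_pc, Hf.
  - apply cj_lub. intros r rs. apply Fb_c1; auto.
Qed.

Lemma Fb_down_breg {L : frame} (f : rhom (L -> Prop)) : inFbar f ->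
  forall t u, t < u -> cle (breg (hdown f t)) (hdown f u).
Proof.
  intros Hf t u tu. apply cle_trans with (cpc (hup f t)).
  - apply pc_anti, Fb_up_le_pc, Hf.
  - apply Fb_c1; auto.
Qed.

Lemma Fb_up_breg {L : frame} (f : rhom (L -> Prop)) : inFbar f ->
  forall u t, u < t -> cle (breg (hup f t)) (hup f u).
Proof.
  intros Hf u t ut. apply cle_trans with (cpc (hdown f t)).
  - apply pc_anti, Fb_down_le_pc, Hf.
  - apply Fb_c2; auto.
Qed.

Lemma Fb_const {L : frame} (A B : L -> Prop) :
  sublocale A -> sublocale B -> cmeet A B = (@cbot L) -> cle (cpc A) B -> cle (cpc B) A ->
  inFbar (RHom (fun _ => A) (fun _ => B)).
Proof.
  intros sA sB H1 H2 H3. split; [split; [|split; [|split; [|split]]]|]; simpl.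
  - intros; exact sA.
  - intros; exact sB.
  - intros; exact H1.
  - intros r. apply seteq; intros x; split; [intros Hx s _; exact Hx| intros Hx; exact (Hx (r+1) (rat_up r))].
  - intros s. apply seteq; intros x; split; [intros Hx r _; exact Hx| intros Hx; exact (Hx (s-1) (rat_down s))].
  - intros; split; assumption.
Qed.

Lemma pinf_Fbar {L : frame} : inFbar (pinf L).
Proof.
  unfold pinf. apply Fb_const; [apply sl_ctop| apply sl_cbot| apply bot_eq, cmeet_r| |].
  - rewrite pc_top. apply cle_refl.
  - rewrite pc_bot. apply cle_refl.
Qed.

Lemma minf_Fbar {L : frame} : inFbar (minf L).
Proof.
  unfold minf. apply Fb_const; [apply sl_cbot| apply sl_ctop| apply bot_eq, cmeet_l| |].
  - rewrite pc_bot. apply cle_refl.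
  - rewrite pc_top. apply cle_refl.
Qed.

Lemma join_lemma {L : frame} (f g : rhom (L -> Prop)) :
  inFbar f -> inFbar g -> cpc (cjoinI (fun _ => True) (hdown f)) = (@cbot L) ->
  Fbar_join f g (pinf L) -> g = pinf L.
Proof.
  intros Hf Hg Htot [_ [_ [_ Hmin]]].
  pose (kd := fun s => cjoinI (fun r => r < s) (fun r => cmeet (hdown f r) (hdown g r))).
  pose (ku := fun r => cjoinI (fun t => r < t) (fun t => cpc (kd t))).
  assert (skd : forall s, sublocale (kd s)) by (intros s; apply sl_cjoinI; intros; apply sl_cmeet).
  assert (sku : forall r, sublocale (ku r)) by (intros r; apply sl_cjoinI; intros; apply sl_cpc).
  assert (kd_mono : forall s s', s <= s' -> cle (kd s) (kd s')).
  { intros s s' H x Hx r rs. apply Hx. exact: lt_le_trans rs H. }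
  assert (kd_f : forall s, cle (kd s) (hdown f s)).
  { intros s. apply cj_lub. intros r rs. eapply cle_trans; [apply cmeet_l| apply Fb_down_mono; [exact Hf| exact: ltW rs]]. }
  assert (kd_g : forall s, cle (kd s) (hdown g s)).
  { intros s. apply cj_lub. intros r rs. eapply cle_trans; [apply cmeet_r| apply Fb_down_mono; [exact Hg| exact: ltW rs]]. }
  assert (Hk : inFbar (RHom ku kd)).
  { split; [split; [|split; [|split; [|split]]]|]; simpl.
    - exact sku.
    - exact skd.
    - intros r s sr. rewrite cmeetC. apply dzI; [apply skd| intros; apply sl_cpc|].
      intros t rt. apply (disj_mono _ (kd t) _ (cpc (kd t))); [|apply cle_refl| apply cmeet_pc, skd].
      apply kd_mono. apply ltW. exact: le_lt_trans sr rt.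
    - intros r. exact (cj_dense_up _ r).
    - intros s. exact (cj_dense_down _ s).
    - intros r s rs. split.
      + destruct (rat_mid r s rs) as [t [rt ts]]. destruct (rat_mid t s ts) as [u [tu us]].
        apply cle_trans with (breg (kd t)).
        * apply pc_anti. exact (cj_ub (fun t => r < t) (fun t => cpc (kd t)) t rt).
        * apply cle_trans with (breg (cmeet (hdown f t) (hdown g t))).
          -- apply breg_mono. apply cj_lub. intros q qt.
             apply cmeet_mono; apply Fb_down_mono; auto; exact: ltW qt.
          -- apply cle_trans with (cmeet (hdown f u) (hdown g u)).
             ++ apply cmeet_glb; [apply sl_cpc| |].
                ** apply cle_trans with (breg (hdown f t)); [apply breg_mono, cmeet_l| apply Fb_down_breg; auto].
                ** apply cle_trans with (breg (hdown g t)); [apply breg_mono, cmeet_r| apply Fb_down_breg; auto].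
             ++ exact (cj_ub (fun r => r < s) (fun r => cmeet (hdown f r) (hdown g r)) u us).
      + exact (cj_ub (fun t => r < t) (fun t => cpc (kd t)) s rs). }
  assert (Hfk : hle f (RHom ku kd)).
  { split; simpl.
    - intros r. rewrite (Fb_up_rep f Hf r). apply cj_mono. intros t _. apply pc_anti, kd_f.
    - intros s. apply kd_f. }
  assert (Hgk : hle g (RHom ku kd)).
  { split; simpl.
    - intros r. rewrite (Fb_up_rep g Hg r). apply cj_mono. intros t _. apply pc_anti, kd_g.
    - intros s. apply kd_g. }
  destruct (Hmin _ Hk Hfk Hgk) as [_ Hd]. simpl in Hd.
  assert (Hfg : forall r, cmeet (hdown f r) (hdown g r) = (@cbot L)).
  { intros r. apply bot_eq. apply cle_trans with (kd (r+1)).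
    - exact (cj_ub (fun q => q < r + 1) (fun q => cmeet (hdown f q) (hdown g q)) r (rat_up r)).
    - apply Hd. }
  assert (Hg0 : forall t, hdown g t = (@cbot L)).
  { intros t. apply bot_eq. rewrite <- Htot. apply cpc_le; [apply Fb_sdown; auto|].
    apply dzI; [apply Fb_sdown; auto| intros; apply Fb_sdown; auto|].
    intros s _. case: (leP s t) => H.
    - apply (disj_mono _ (hdown g t) _ (hdown f t)); [apply cle_refl| apply Fb_down_mono; auto| rewrite cmeetC; apply Hfg].
    - apply (disj_mono _ (hdown g s) _ (hdown f s)); [apply Fb_down_mono; auto; exact: ltW H| apply cle_refl| rewrite cmeetC; apply Hfg]. }
  apply rhom_ext; simpl.
  - intros r. apply cle_anti.
    + apply cle_top. apply (Fb_sup _ Hg).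
    + rewrite <- pc_bot. rewrite <- (Hg0 (r+1)). apply (Fb_c2 _ Hg r (r+1) (rat_up r)).
  - intros s. apply Hg0.
Qed.

Lemma meet_lemma {L : frame} (f g : rhom (L -> Prop)) :
  inFbar f -> inFbar g -> cpc (cjoinI (fun _ => True) (hup f)) = (@cbot L) ->
  Fbar_meet f g (minf L) -> g = minf L.
Proof.
  intros Hf Hg Htot [_ [_ [_ Hmax]]].
  pose (ku := fun r => cjoinI (fun s => r < s) (fun s => cmeet (hup f s) (hup g s))).
  pose (kd := fun s => cjoinI (fun r => r < s) (fun r => cpc (ku r))).
  assert (sku : forall r, sublocale (ku r)) by (intros r; apply sl_cjoinI; intros; apply sl_cmeet).
  assert (skd : forall s, sublocale (kd s)) by (intros s; apply sl_cjoinI; intros; apply sl_cpc).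
  assert (ku_mono : forall r r', r <= r' -> cle (ku r') (ku r)).
  { intros r r' H x Hx s rs. apply Hx. exact: le_lt_trans H rs. }
  assert (ku_f : forall r, cle (ku r) (hup f r)).
  { intros r. apply cj_lub. intros s rs. eapply cle_trans; [apply cmeet_l| apply Fb_up_mono; [exact Hf| exact: ltW rs]]. }
  assert (ku_g : forall r, cle (ku r) (hup g r)).
  { intros r. apply cj_lub. intros s rs. eapply cle_trans; [apply cmeet_r| apply Fb_up_mono; [exact Hg| exact: ltW rs]]. }
  assert (Hk : inFbar (RHom ku kd)).
  { split; [split; [|split; [|split; [|split]]]|]; simpl.
    - exact sku.
    - exact skd.
    - intros r s sr. apply dzI; [apply sku| intros; apply sl_cpc|].
      intros q qs. apply (disj_mono _ (ku q) _ (cpc (ku q))); [|apply cle_refl| apply cmeet_pc, sku].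
      apply ku_mono. apply ltW. exact: lt_le_trans qs sr.
    - intros r. exact (cj_dense_up _ r).
    - intros s. exact (cj_dense_down _ s).
    - intros r s rs. split.
      + exact (cj_ub (fun r => r < s) (fun r => cpc (ku r)) r rs).
      + destruct (rat_mid r s rs) as [u [ru us]]. destruct (rat_mid u s us) as [t [ut ts]].
        apply cle_trans with (breg (ku t)).
        * apply pc_anti. exact (cj_ub (fun r => r < s) (fun r => cpc (ku r)) t ts).
        * apply cle_trans with (breg (cmeet (hup f t) (hup g t))).
          -- apply breg_mono. apply cj_lub. intros q tq.
             apply cmeet_mono; apply Fb_up_mono; auto; exact: ltW tq.
          -- apply cle_trans with (cmeet (hup f u) (hup g u)).
             ++ apply cmeet_glb; [apply sl_cpc| |].
                ** apply cle_trans with (breg (hup f t)); [apply breg_mono, cmeet_l| apply Fb_up_breg; auto].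
                ** apply cle_trans with (breg (hup g t)); [apply breg_mono, cmeet_r| apply Fb_up_breg; auto].
             ++ exact (cj_ub (fun s => r < s) (fun s => cmeet (hup f s) (hup g s)) u ru). }
  assert (Hkf : hle (RHom ku kd) f).
  { split; simpl.
    - intros r. apply ku_f.
    - intros s. rewrite (Fb_down_rep f Hf s). apply cj_mono. intros r _. apply pc_anti, ku_f. }
  assert (Hkg : hle (RHom ku kd) g).
  { split; simpl.
    - intros r. apply ku_g.
    - intros s. rewrite (Fb_down_rep g Hg s). apply cj_mono. intros r _. apply pc_anti, ku_g. }
  destruct (Hmax _ Hk Hkf Hkg) as [Hu _]. simpl in Hu.
  assert (Hfg : forall r, cmeet (hup f r) (hup g r) = (@cbot L)).
  { intros r. apply bot_eq. apply cle_trans with (ku (r-1)).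
    - exact (cj_ub (fun q => r - 1 < q) (fun q => cmeet (hup f q) (hup g q)) r (rat_down r)).
    - apply Hu. }
  assert (Hg0 : forall t, hup g t = (@cbot L)).
  { intros t. apply bot_eq. rewrite <- Htot. apply cpc_le; [apply Fb_sup; auto|].
    apply dzI; [apply Fb_sup; auto| intros; apply Fb_sup; auto|].
    intros s _. case: (leP s t) => H.
    - apply (disj_mono _ (hup g s) _ (hup f s)); [apply Fb_up_mono; auto| apply cle_refl| rewrite cmeetC; apply Hfg].
    - apply (disj_mono _ (hup g t) _ (hup f t)); [apply cle_refl| apply Fb_up_mono; auto; exact: ltW H| rewrite cmeetC; apply Hfg]. }
  apply rhom_ext; simpl.
  - intros r. apply Hg0.
  - intros s. apply cle_anti.
    + apply cle_top. apply (Fb_sdown _ Hg).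
    + rewrite <- pc_bot. rewrite <- (Hg0 (s-1)). apply (Fb_c1 _ Hg (s-1) s (rat_down s)).
Qed.

Lemma breg_disj {L : frame} (S T : L -> Prop) : sublocale S -> sublocale T ->
  cmeet S T = (@cbot L) -> cmeet (breg S) (breg T) = (@cbot L).
Proof.
  intros sS sT H.
  apply (disj_mono _ (cpc T) _ (breg T)); [| apply cle_refl| apply cmeet_pc, sl_cpc].
  rewrite <- (pc3 T sT). apply breg_mono. apply cpc_le; auto.
Qed.

Lemma cjoin2_inter {L : frame} (X Y : L -> Prop) :
  cjoin2 X Y = (fun y => forall b : bool, True -> (if b then X else Y) y).
Proof.
  apply seteq; intros y; split.
  - intros [H1 H2] [|] _; assumption.
  - intros H. split; [exact (H true I)| exact (H false I)].
Qed.

Lemma disj_cjoin2 {L : frame} (Z X Y : L -> Prop) : sublocale Z -> sublocale X -> sublocale Y ->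
  cmeet Z X = (@cbot L) -> cmeet Z Y = (@cbot L) -> cmeet Z (cjoin2 X Y) = (@cbot L).
Proof.
  intros sZ sX sY H1 H2. rewrite cjoin2_inter. apply dz; [exact sZ| intros [|] _; assumption| intros [|] _; assumption].
Qed.

Lemma r2_lemma {L : frame} (X Y : L -> Prop) : sublocale X -> sublocale Y -> cle (cpc X) Y ->
  bjoin2 (breg X) (breg Y) = (@ctop L).
Proof.
  intros sX sY H.
  pose (W := cjoin2 X (cpc X)).
  assert (sW : sublocale W) by (apply sl_cjoin2; [exact sX| apply sl_cpc]).
  assert (HW : cpc W = (@cbot L)).
  { assert (sV : sublocale (cpc W)) by apply sl_cpc.
    apply bot_eq. apply cle_trans with (cmeet (cpc X) (cpc (cpc X))).
    - apply cmeet_glb; [exact sV| |].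
      + apply cpc_le; [exact sV|]. apply (disj_mono _ (cpc W) _ W); [apply cle_refl| intros x Hx; exact (proj1 Hx)| apply pc_cmeet, sW].
      + apply cpc_le; [exact sV|]. apply (disj_mono _ (cpc W) _ W); [apply cle_refl| intros x Hx; exact (proj2 Hx)| apply pc_cmeet, sW].
    - rewrite cmeet_pc; [apply cle_refl| apply sl_cpc]. }
  apply cle_anti.
  - apply cle_top, sl_cpc.
  - apply cle_trans with (breg W).
    + unfold breg. rewrite HW pc_bot. apply cle_refl.
    + apply breg_mono. intros x [H1 H2]. split.
      * apply (le_breg X sX), H1.
      * apply H. apply (le_breg Y sY), H2.
Qed.

Lemma pc_pair {L : frame} (X Y : L -> Prop) : sublocale X -> sublocale Y ->
  breg (cjoin2 X Y) = (@ctop L) -> cmeet (cpc X) (cpc Y) = (@cbot L).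
Proof.
  intros sX sY H.
  assert (sZ : sublocale (cmeet (cpc X) (cpc Y))) by apply sl_cmeet.
  apply bot_eq. apply cle_trans with (cpc (cjoin2 X Y)).
  - apply cpc_le; [exact sZ|]. apply disj_cjoin2; auto.
    + apply le_pc_disj; [exact sX| apply cmeet_l].
    + apply le_pc_disj; [exact sY| apply cmeet_r].
  - rewrite <- (pc3 _ (sl_cjoin2 _ _ sX sY)). change (cle (cpc (breg (cjoin2 X Y))) (@cbot L)).
    rewrite H pc_top. apply cle_refl.
Qed.

Lemma part1 {L : frame} (f : rhom (L -> Prop)) : inF f -> inC (beta f).
Proof.
  intros [Hf HF].
  assert (sU := Fb_sup f Hf). assert (sD := Fb_sdown f Hf).
  split; [split; [|split; [|split; [|split]]]|split; [|split]]; simpl.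
  - intros r. split; [apply sl_cpc| exact (breg_idem _)].
  - intros s. split; [apply sl_cpc| exact (breg_idem _)].
  - intros r s sr. apply breg_disj; auto. apply (Fb_r1 f Hf r s sr).
  - intros r. unfold bjoinI. rewrite (breg_join (fun s => r < s) (hup f)); [|intros; apply sU].
    f_equal. apply (Fb_r3 f Hf r).
  - intros s. unfold bjoinI. rewrite (breg_join (fun r => r < s) (hdown f)); [|intros; apply sD].
    f_equal. apply (Fb_r4 f Hf s).
  - intros r s rs. apply r2_lemma; auto. apply (Fb_c1 f Hf r s rs).
  - unfold bjoinI. rewrite (breg_join (fun _ => True) (hup f)); [|intros; apply sU].
    pose (A := cjoinI (fun _ : rat => True) (hup f)).
    assert (sA : sublocale A) by (apply sl_cjoinI; intros; apply sU).
    pose (g := RHom (fun _ : rat => cpc A) (fun _ : rat => cpc (cpc A))).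
    assert (Hg : inFbar g).
    { apply Fb_const; [apply sl_cpc| apply sl_cpc| apply cmeet_pc, sl_cpc| apply cle_refl|].
      rewrite (pc3 A sA). apply cle_refl. }
    assert (Hm : Fbar_meet f g (minf L)).
    { split; [apply minf_Fbar| split; [|split]].
      - split; simpl; intros; [apply cle_bot| apply cle_top; auto].
      - split; simpl; intros; [apply cle_bot| apply cle_top, sl_cpc].
      - intros k Hk [kf1 kf2] [kg1 kg2].
        assert (Hk0 : forall r, hup k r = (@cbot L)).
        { intros r. apply bot_eq. apply cle_trans with (cmeet A (cpc A)).
          - apply cmeet_glb; [apply Fb_sup, Hk| |].
            + apply cle_trans with (hup f r); [apply kf1| exact (cj_ub (fun _ => True) (hup f) r I)].
            + apply kg1.
          - rewrite cmeet_pc; [apply cle_refl| exact sA]. }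
        split; simpl.
        + intros r. rewrite Hk0. apply cle_refl.
        + intros s. rewrite <- pc_bot. rewrite <- (Hk0 (s-1)). exact (Fb_c1 k Hk (s-1) s (rat_down s)). }
    pose proof (E := proj2 (HF g Hg) Hm).
    assert (E' : cpc A = (@cbot L)) by exact (f_equal (fun k => hup k 0) E).
    unfold breg. fold A. rewrite E'. apply pc_bot.
  - unfold bjoinI. rewrite (breg_join (fun _ => True) (hdown f)); [|intros; apply sD].
    pose (A := cjoinI (fun _ : rat => True) (hdown f)).
    assert (sA : sublocale A) by (apply sl_cjoinI; intros; apply sD).
    pose (g := RHom (fun _ : rat => cpc (cpc A)) (fun _ : rat => cpc A)).
    assert (Hg : inFbar g).
    { apply Fb_const; [apply sl_cpc| apply sl_cpc| apply pc_cmeet, sl_cpc| |apply cle_refl].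
      rewrite (pc3 A sA). apply cle_refl. }
    assert (Hm : Fbar_join f g (pinf L)).
    { split; [apply pinf_Fbar| split; [|split]].
      - split; simpl; intros; [apply cle_top; auto| apply cle_bot].
      - split; simpl; intros; [apply cle_top, sl_cpc| apply cle_bot].
      - intros k Hk [kf1 kf2] [kg1 kg2].
        assert (Hk0 : forall s, hdown k s = (@cbot L)).
        { intros s. apply bot_eq. apply cle_trans with (cmeet A (cpc A)).
          - apply cmeet_glb; [apply Fb_sdown, Hk| |].
            + apply cle_trans with (hdown f s); [apply kf2| exact (cj_ub (fun _ => True) (hdown f) s I)].
            + apply kg2.
          - rewrite cmeet_pc; [apply cle_refl| exact sA]. }
        split; simpl.
        + intros r. rewrite <- pc_bot. rewrite <- (Hk0 (r+1)). exact (Fb_c2 k Hk r (r+1) (rat_up r)).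
        + intros s. rewrite Hk0. apply cle_refl. }
    pose proof (E := proj1 (HF g Hg) Hm).
    assert (E' : cpc A = (@cbot L)) by exact (f_equal (fun k => hdown k 0) E).
    unfold breg. fold A. rewrite E'. apply pc_bot.
Qed.

Lemma part2 {L : frame} (f g : rhom (L -> Prop)) : inFbar f -> inFbar g ->
  (hle f g <-> hle (beta f) (beta g)).
Proof.
  intros Hf Hg. split.
  - intros [H1 H2]. split; simpl; intros; apply breg_mono; auto.
  - intros [H1 H2]. simpl in H1, H2. split.
    + intros r. rewrite (Fb_up_rep f Hf r) (Fb_up_rep g Hg r). apply cj_mono. intros s _.
      rewrite <- (pc3 _ (Fb_sdown f Hf s)). rewrite <- (pc3 _ (Fb_sdown g Hg s)).
      apply pc_anti, H2.
    + intros s. rewrite (Fb_down_rep f Hf s) (Fb_down_rep g Hg s). apply cj_mono. intros r _.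
      rewrite <- (pc3 _ (Fb_sup f Hf r)). rewrite <- (pc3 _ (Fb_sup g Hg r)).
      apply pc_anti, H1.
Qed.

Lemma part4 {L : frame} (h : rhom (L -> Prop)) : inC h -> exists2 f, inF f & beta f = h.
Proof.
  intros [[ra [rb [h1 [h3 h4]]]] [h2 [h5 h6]]].
  assert (sa : forall r, sublocale (hup h r)) by (intros r; exact (proj1 (ra r))).
  assert (sb : forall s, sublocale (hdown h s)) by (intros s; exact (proj1 (rb s))).
  assert (ea : forall r, cpc (cpc (hup h r)) = hup h r) by (intros r; exact (proj2 (ra r))).
  assert (eb : forall s, cpc (cpc (hdown h s)) = hdown h s) by (intros s; exact (proj2 (rb s))).
  assert (F2 : forall r t, r < t -> cle (cpc (hdown h t)) (hup h r)).
  { intros r t rt. rewrite <- (ea r). apply cpc_le; [apply sl_cpc|]. rewrite cmeetC.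
    apply pc_pair; auto. exact (h2 r t rt). }
  assert (F2' : forall r t, r < t -> cle (cpc (hup h r)) (hdown h t)).
  { intros r t rt. rewrite <- (eb t). apply cpc_le; [apply sl_cpc|].
    apply pc_pair; auto. exact (h2 r t rt). }
  assert (ab : forall m, cle (hup h m) (cpc (hdown h m))).
  { intros m. apply cpc_le; [apply sa| apply h1, lexx]. }
  assert (ba : forall m, cle (hdown h m) (cpc (hup h m))).
  { intros m. apply cpc_le; [apply sb| rewrite cmeetC; apply h1, lexx]. }
  pose (U := fun r => cjoinI (fun s => r < s) (fun s => cpc (hdown h s))).
  pose (D := fun s => cjoinI (fun r => r < s) (fun r => cpc (hup h r))).
  assert (sU : forall r, sublocale (U r)) by (intros r; apply sl_cjoinI; intros; apply sl_cpc).
  assert (sD : forall s, sublocale (D s)) by (intros s; apply sl_cjoinI; intros; apply sl_cpc).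
  assert (U_le : forall r, cle (U r) (hup h r)).
  { intros r. apply cj_lub. intros s rs. apply F2, rs. }
  assert (D_le : forall s, cle (D s) (hdown h s)).
  { intros s. apply cj_lub. intros r rs. apply F2', rs. }
  assert (Hf : inFbar (RHom U D)).
  { split; [split; [|split; [|split; [|split]]]|]; simpl.
    - exact sU.
    - exact sD.
    - intros r s sr. apply (disj_mono _ (hup h r) _ (hdown h s)); auto.
    - intros r. exact (cj_dense_up _ r).
    - intros s. exact (cj_dense_down _ s).
    - intros r s rs. destruct (rat_mid r s rs) as [m [rm ms]]. split.
      + apply cle_trans with (cpc (cpc (hdown h m))).
        * apply pc_anti. exact (cj_ub (fun s => r < s) (fun s => cpc (hdown h s)) m rm).
        * rewrite eb. apply cle_trans with (cpc (hup h m)); [apply ba|].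
          exact (cj_ub (fun r => r < s) (fun r => cpc (hup h r)) m ms).
      + apply cle_trans with (cpc (cpc (hup h m))).
        * apply pc_anti. exact (cj_ub (fun r => r < s) (fun r => cpc (hup h r)) m ms).
        * rewrite ea. apply cle_trans with (cpc (hdown h m)); [apply ab|].
          exact (cj_ub (fun s => r < s) (fun s => cpc (hdown h s)) m rm). }
  assert (Eu : forall r, breg (U r) = hup h r).
  { intros r. apply cle_anti.
    - apply cle_trans with (breg (hup h r)); [apply breg_mono, U_le| unfold breg; rewrite ea; apply cle_refl].
    - rewrite {1}(h3 r). apply breg_mono. apply cj_lub. intros s rs.
      apply cle_trans with (cpc (hdown h s)); [apply ab|].
      exact (cj_ub (fun s => r < s) (fun s => cpc (hdown h s)) s rs). }
  assert (Ed : forall s, breg (D s) = hdown h s).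
  { intros s. apply cle_anti.
    - apply cle_trans with (breg (hdown h s)); [apply breg_mono, D_le| unfold breg; rewrite eb; apply cle_refl].
    - rewrite {1}(h4 s). apply breg_mono. apply cj_lub. intros r rs.
      apply cle_trans with (cpc (hup h r)); [apply ba|].
      exact (cj_ub (fun r => r < s) (fun r => cpc (hup h r)) r rs). }
  assert (Tu : cpc (cjoinI (fun _ => True) U) = (@cbot L)).
  { rewrite <- (pc3 _ (sl_cjoinI (fun _ => True) U (fun s _ => sU s))).
    change (cpc (breg (cjoinI (fun _ : rat => True) U)) = (@cbot L)).
    rewrite <- (breg_join (fun _ => True) U (fun s _ => sU s)).
    assert (E : (fun s => breg (U s)) = hup h) by (apply functional_extensionality; exact Eu).
    rewrite E. change (cpc (bjoinI (fun _ => True) (hup h)) = (@cbot L)). rewrite h5. apply pc_top. }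
  assert (Td : cpc (cjoinI (fun _ => True) D) = (@cbot L)).
  { rewrite <- (pc3 _ (sl_cjoinI (fun _ => True) D (fun s _ => sD s))).
    change (cpc (breg (cjoinI (fun _ : rat => True) D)) = (@cbot L)).
    rewrite <- (breg_join (fun _ => True) D (fun s _ => sD s)).
    assert (E : (fun s => breg (D s)) = hdown h) by (apply functional_extensionality; exact Ed).
    rewrite E. change (cpc (bjoinI (fun _ => True) (hdown h)) = (@cbot L)). rewrite h6. apply pc_top. }
  exists (RHom U D).
  - split; [exact Hf|]. intros g Hg. split.
    + apply join_lemma; auto.
    + apply meet_lemma; auto.
  - apply rhom_ext; simpl; [exact Eu| exact Ed].
Qed.

Theorem mainTheorem15 (L : frame) :
  (forall f : rhom (fcar L -> Prop), inF f -> inC (beta f)) /\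
  (forall f g : rhom (fcar L -> Prop), inF f -> inF g ->
     (hle f g <-> hle (beta f) (beta g))) /\
  (forall f g : rhom (fcar L -> Prop), inF f -> inF g -> beta f = beta g -> f = g) /\
  (forall h : rhom (fcar L -> Prop), inC h -> exists2 f, inF f & beta f = h).
Proof.
  split; [|split; [|split]].
  - intros f Hf. apply part1, Hf.
  - intros f g [Hf _] [Hg _]. apply part2; auto.
  - intros f g [Hf _] [Hg _] E.
    assert (H1 : hle f g) by (apply (part2 f g Hf Hg); rewrite E; split; intros; apply cle_refl).
    assert (H2 : hle g f) by (apply (part2 g f Hg Hf); rewrite E; split; intros; apply cle_refl).
    apply rhom_ext.
    + intros r. apply cle_anti; [apply (proj1 H1)| apply (proj1 H2)].
    + intros s. apply cle_anti; [apply (proj2 H2)| apply (proj2 H1)].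
  - intros h Hh. apply part4, Hh.
Qed.
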